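(* Consider an instance of the Profile Matching Problem (defined in the context). Fix a profile $\mathbf{a}\in Q_k$, let $\mathcal{M}_\mathbf{a}$ and $\mathcal{W}_\mathbf{a}$ be the sets of men and of women whose profile equals $\mathbf{a}$, and suppose $|\mathcal{M}_\mathbf{a}|\le|\mathcal{W}_\mathbf{a}|$. Then in every stable matching, each man in $\mathcal{M}_\mathbf{a}$ is matched to a woman in $\mathcal{W}_\mathbf{a}$.
   Context: Profile Matching Problem: a set $\mathcal{M}$ of $n$ men and a set $\mathcal{W}$ of $n$ women; each participant $x$ has a profile $\mathbf{a}(x)\in Q_k=\{0,1\}^k$. The distance $d$ on $Q_k$ is either the Hamming distance $d_h(\mathbf{a},\mathbf{a}')=\sum_{i=1}^k\mathbf{1}(a_i\ne a_i')$ or the Weighted Hamming distance $d_w(\mathbf{a},\mathbf{a}')=\sum_{i=1}^k2^{-i}\mathbf{1}(a_i\ne a_i')$; $d(x,y)=d(\mathbf{a}(x),\mathbf{a}(y))$. Each participant $x$ has a tie-breaking list $T_x$ (a strict order on the opposite sex); the strict preference list of $x$ ranks the opposite sex in increasing order of $d(x,\cdot)$, ties broken by $T_x$. A matching pairs each man with at most one woman and vice versa; $(m,w)$ is a blocking pair if each strictly prefers the other to his/her partner in the matching; a matching is stable if it has no blocking pair. *)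

(* Defs.v *)
From mathcomp Require Import all_boot all_order all_algebra.
From mathcomp Require Import perm.
Set Implicit Arguments. Unset Strict Implicit. Unset Printing Implicit Defensive.
Import Order.TTheory GRing.Theory Num.Theory.
Local Open Scope ring_scope.

(* Profiles: elements of Q_k = {0,1}^k, coordinates indexed 1..k by 'I_k
   (coordinate i : 'I_k is the paper's coordinate i+1). *)
Definition profile (k : nat) := {ffun 'I_k -> bool}.

Inductive dist_kind := Hamming | WeightedHamming.

Definition hamming (k : nat) (a b : profile k) : rat :=
  \sum_(i < k) (a i != b i)%:R.

(* d_w(a,b) = sum_{i=1}^k 2^{-i} 1(a_i <> b_i); index i : 'I_k is i+1. *)
Definition weighted_hamming (k : nat) (a b : profile k) : rat :=
  \sum_(i < k) (a i != b i)%:R / 2%:R ^+ i.+1.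

Definition pdist (dk : dist_kind) (k : nat) (a b : profile k) : rat :=
  match dk with
  | Hamming => hamming a b
  | WeightedHamming => weighted_hamming a b
  end.

(* An instance: n men and n women (both indexed by 'I_n), profiles, and
   tie-breaking lists given as strict orders: T x y is the position of y in
   x's tie-breaking list (a bijection, so a strict total order). *)
Record instance (n k : nat) := Instance {
  profM : 'I_n -> profile k;
  profW : 'I_n -> profile k;
  tieM : 'I_n -> {perm 'I_n};
  tieW : 'I_n -> {perm 'I_n}
}.

Section Prefs.
Variables (dk : dist_kind) (n k : nat) (I : instance n k).

Definition man_prefers (m w w' : 'I_n) : bool :=
  let d := pdist dk (profM I m) in
  (d (profW I w) < d (profW I w')) ||
  ((d (profW I w) == d (profW I w')) && (tieM I m w < tieM I m w')%N).

Definition woman_prefers (w m m' : 'I_n) : bool :=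
  let d := pdist dk (profW I w) in
  (d (profM I m) < d (profM I m')) ||
  ((d (profM I m) == d (profM I m')) && (tieW I w m < tieW I w m')%N).

Definition is_matching (mu : 'I_n -> option 'I_n) : Prop :=
  forall m m' w, mu m = Some w -> mu m' = Some w -> m = m'.

(* Strict preference over the current (possibly absent) partner:
   being matched to anyone is preferred to being unmatched. *)
Definition man_prefers_to_partner (mu : 'I_n -> option 'I_n) (m w : 'I_n) : Prop :=
  match mu m with
  | None => True
  | Some w' => man_prefers m w w'
  end.

Definition woman_prefers_to_partner (mu : 'I_n -> option 'I_n) (w m : 'I_n) : Prop :=
  (forall m', mu m' <> Some w) \/
  (exists m', mu m' = Some w /\ woman_prefers w m m').

Definition blocking_pair (mu : 'I_n -> option 'I_n) (m w : 'I_n) : Prop :=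
  man_prefers_to_partner mu m w /\ woman_prefers_to_partner mu w m.

Definition stable (mu : 'I_n -> option 'I_n) : Prop :=
  is_matching mu /\ forall m w, ~ blocking_pair mu m w.

End Prefs.

(* Main.v *)
Require Import Defs.
From mathcomp Require Import all_boot all_order all_algebra.
From mathcomp Require Import perm.
Import Order.TTheory GRing.Theory Num.Theory.
Local Open Scope ring_scope.
Lemma pdist0 dk k (a : profile k) : pdist dk a a = 0.
Proof. by case: dk; rewrite /= /hamming /weighted_hamming big1 // => i _; rewrite eqxx ?mul0r. Qed.
Lemma pdist_gt0 dk k (a b : profile k) : a != b -> 0 < pdist dk a b.
Proof.
move=> ne; have [i Hi] : exists i, a i != b i.
  apply/existsP; move: ne; apply: contraR; rewrite negb_exists => /forallP H.
  by apply/eqP/ffunP => i; move: (H i); rewrite negbK => /eqP.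
case: dk; rewrite /= /hamming /weighted_hamming (bigD1 i) //= Hi.
  by apply: ltr_wpDr; [apply: sumr_ge0 => j _; apply: ler0n | rewrite ltr01].
apply: ltr_wpDr; first by apply: sumr_ge0 => j _; apply: divr_ge0; [apply: ler0n| apply: exprn_ge0; apply: ler0n].
by rewrite mul1r invr_gt0 exprn_gt0.
Qed.
Local Close Scope ring_scope.
Theorem lemmaA1 (dk : dist_kind) (n k : nat) (I : instance n k) (a : profile k)
  (hcard : #|[set m : 'I_n | profM I m == a]| <= #|[set w : 'I_n | profW I w == a]|)
  (mu : 'I_n -> option 'I_n) (hst : stable dk I mu) :
  forall m : 'I_n, profM I m = a ->
    exists w : 'I_n, mu m = Some w /\ profW I w = a.
Proof.
move=> m hm.
have [hmat hnb] := hst.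
have good : forall w', mu m = Some w' -> profW I w' = a -> exists w, mu m = Some w /\ profW I w = a.
  by move=> w' h1 h2; exists w'.
case: (boolP (if mu m is Some w' then profW I w' == a else false)).
  by case hmu: (mu m) => [w'|] // /eqP; exists w'.
move=> hnot; exfalso.
pose P := [set m' | (profM I m' == a) && (if mu m' is Some w then profW I w == a else false)].
pose f := fun m' => odflt m' (mu m').
have [w hwa hwP] : exists2 w, w \in [set w : 'I_n | profW I w == a] & w \notin f @: P.
  apply/subsetPn; apply/negP => hsub.
  have h1 := subset_leq_card hsub.
  have h2 := leq_imset_card f P.
  have h3 : P \proper [set m : 'I_n | profM I m == a].
    apply/properP; split.
      by apply/subsetP => x; rewrite !inE => /andP[].
    exists m; first by rewrite inE hm.
    by rewrite inE negb_and hnot orbT.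
  have h4 := proper_card h3.
  have := leq_trans hcard (leq_trans h1 h2).
  by rewrite leqNgt h4.
rewrite inE in hwa.
apply: (hnb m w); split.
  rewrite /man_prefers_to_partner.
  case hmu: (mu m) hnot => [w'|] // hw'.
  rewrite /man_prefers hm (eqP hwa) pdist0.
  by rewrite (@pdist_gt0 dk k a (profW I w')) // eq_sym.
rewrite /woman_prefers_to_partner.
case: (boolP [exists m', mu m' == Some w]).
  move/existsP=> [m' /eqP hm']; right; exists m'; split => //.
  rewrite /woman_prefers hm (eqP hwa) pdist0.
  have : profM I m' != a.
    apply/negP => /eqP hm'a; move: hwP; apply/negP; rewrite negbK.
    apply/imsetP; exists m'; first by rewrite /P inE hm'a hm' /= hwa eqxx.
    by rewrite /f hm'.
  by move=> ne; rewrite (@pdist_gt0 dk k a (profM I m')) // eq_sym.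
rewrite negb_exists => /forallP H; left => m' hm'.
by move: (H m'); rewrite hm' eqxx.
Qed.
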